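(* Inserting $n$ values, one at a time, into an initially empty black-white array (BWA) takes $O(\log n)$ average (amortized) time per insertion.
   Context: A black-white array (BWA) of size $N=2^K$ stores values from a totally ordered set. It has a white array $W[1..N-1]$ and a black array $B[1..N/2-1]$. For $i\ge0$, the segment of rank $i$ of either array is the index block $[2^i,2^{i+1}-1]$. A state variable $\mathtt{total}$ counts stored values and is initially $0$. The rank-$i$ segment is active iff bit $i$ of $\mathtt{total}$ is $1$. Insert$(v)$: if rank 0 is inactive, set $W[1]=v$; otherwise set $B[1]=v$ and perform $\mathrm{merge}(0)$. $\mathrm{merge}(i)$: merge the sorted white and black segments of rank $i$ using a standard two-way merge, at cost proportional to the segment length. The result goes into the white rank-$(i+1)$ segment if that segment is inactive. Otherwise it goes into the black rank-$(i+1)$ segment, followed by $\mathrm{merge}(i+1)$. When an insertion completes, $\mathtt{total}$ has increased by one. *)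

(* Defs.v *)
From mathcomp Require Import all_boot all_order.
Set Implicit Arguments. Unset Strict Implicit. Unset Printing Implicit Defensive.

(* Black-white array (BWA).  Segments of rank i of the white array W and the
   black array B (index blocks [2^i, 2^(i+1)-1]) are represented as sequences
   of length 2^i: [W i] and [B i]. *)
Record bwa (T : Type) := BWA {
  total : nat;
  wseg : nat -> seq T;
  bseg : nat -> seq T
}.

Definition empty_bwa (T : Type) : bwa T := BWA 0 (fun _ => [::]) (fun _ => [::]).

Definition bit (n i : nat) : bool := odd (n %/ 2 ^ i).

Definition active T (s : bwa T) (i : nat) : bool := bit (total s) i.

Definition upd T (f : nat -> seq T) (i : nat) (x : seq T) : nat -> seq T :=
  fun j => if j == i then x else f j.

(* Merging the two sorted rank-i segments with the
   standard two-way merge ([path.merge]) costs the segment length 2^i.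
   [fuel] bounds the recursion depth (the cascade stops at the first inactive
   rank, so fuel = total+1 always suffices). *)
Fixpoint merge_cascade T (le : rel T) (fuel : nat) (i : nat) (s : bwa T)
  : bwa T * nat :=
  let m := merge le (wseg s i) (bseg s i) in
  let c := 2 ^ i in
  if ~~ active s i.+1 then (BWA (total s) (upd (wseg s) i.+1 m) (bseg s), c)
  else
    let s' := BWA (total s) (wseg s) (upd (bseg s) i.+1 m) in
    match fuel with
    | 0 => (s', c)
    | f.+1 => let (s'', c') := merge_cascade le f i.+1 s' in (s'', c + c')
    end.

Definition bwa_insert T (le : rel T) (v : T) (s : bwa T) : bwa T * nat :=
  if ~~ active s 0 then
    (BWA (total s).+1 (upd (wseg s) 0 [:: v]) (bseg s), 1)
  else
    let s1 := BWA (total s) (wseg s) (upd (bseg s) 0 [:: v]) in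
    let (s2, c) := merge_cascade le (total s).+1 0 s1 in
    (BWA (total s2).+1 (wseg s2) (bseg s2), 1 + c).

Fixpoint insert_all T (le : rel T) (vs : seq T) (s : bwa T) : bwa T * nat :=
  match vs with
  | [::] => (s, 0)
  | v :: vs' =>
      let (s1, c1) := bwa_insert le v s in
      let (s2, c2) := insert_all le vs' s1 in (s2, c1 + c2)
  end.

Definition insertion_cost T (le : rel T) (vs : seq T) : nat :=
  (insert_all le vs (empty_bwa T)).2.

(* Main.v *)
Require Import Defs.
From mathcomp Require Import all_boot all_order.
From mathcomp Require Import zify.
Local Notation total := Defs.total.
Set Implicit Arguments.

Fixpoint Gf (k u : nat) : nat :=
  match k with
  | 0 => 1
  | k'.+1 => if odd u then 2 * Gf k' u./2 else 1
  end.

Definition G u := Gf u u.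

Lemma Gf_fuel k k' u : u <= k -> u <= k' -> Gf k u = Gf k' u.
Proof.
elim: k k' u => [|k IH] [|k'] u //=.
- by rewrite leqn0 => /eqP -> _ /=; case: k'.
- by rewrite leqn0 => _ /eqP ->.
- move=> hk hk'; case: ifP => // ho; congr (2 * _); apply: IH.
  + case: u ho hk hk' => // u _ hk _. rewrite -divn2. lia.
  + case: u ho hk hk' => // u _ _ hk. rewrite -divn2. lia.
Qed.

Lemma GE u : G u = if odd u then 2 * G u./2 else 1.
Proof.
rewrite /G; case: u => [|u] //=; case: ifP => // _; congr (2 * _).
apply: Gf_fuel => //; rewrite uphalfE -divn2; lia.
Qed.

Lemma G_gt0 u : 0 < G u.
Proof. rewrite /G; elim: u {-1}u => [|k IH] v //=; case: ifP => // _; by rewrite muln_gt0 IH. Qed.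

Fixpoint S n := if n is n'.+1 then S n' + G n' else 0.

Lemma S_double m : S m.*2 = m + 2 * S m.
Proof.
elim: m => [|m IH] //.
rewrite doubleS /= IH (GE m.*2.+1) (GE m.*2) /= odd_double /=.
rewrite uphalf_double.
lia.
Qed.

Lemma S_bound n : S n <= n * (trunc_log 2 n).+1.
Proof.
elim: n {-2}n (leqnn n) => [|k IH] n hn; first by move: hn; rewrite leqn0 => /eqP ->.
case: (ltnP 1 n) => h1; last first.
  by case: n h1 hn => [|[|]] //= _ _; rewrite /G /=.
rewrite (trunc_log2S h1).
have hm : n./2 <= k.
  rewrite -ltnS; apply: leq_trans hn; rewrite -divn2 ltn_Pdiv //; lia.
have := IH _ hm.
have Hn := odd_double_half n.
have HS : S n = odd n + n./2 + 2 * S n./2.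
  rewrite -{1}Hn; case: (odd n) => /=; last by rewrite S_double.
  by rewrite add1n /= S_double GE odd_double /=; lia.
rewrite HS; move: Hn; set m := n./2; set L := trunc_log 2 m; set s := S m.
case: (odd n) => /= Hn Hs; rewrite -Hn -muln2; nia.
Qed.

Lemma cascade_total T (le : rel T) f i s : total (merge_cascade le f i s).1 = total s.
Proof.
elim: f i s => [|f IH] i s /=; case: ifP => //= _.
by case E: (merge_cascade _ _ _ _) => [s'' c'] /=; rewrite -(IH i.+1 (BWA (total s) (wseg s) (upd (bseg s) i.+1 (merge le (wseg s i) (bseg s i))))) E.
Qed.

Lemma cascade_cost T (le : rel T) f i s :
  (merge_cascade le f i s).2 + 2 ^ i <= 2 ^ i.+1 * G (total s %/ 2 ^ i.+1).
Proof.
elim: f i s => [|f IH] i s /=.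
- have := G_gt0 (total s %/ 2 ^ i.+1); case: ifP => _ /= hg;
  set g := G _ in hg *; rewrite expnS; nia.
- rewrite /active /bit; case: ifP => /= ho.
  + have := G_gt0 (total s %/ 2 ^ i.+1) => hg.
    set g := G _ in hg *; rewrite expnS; nia.
  + case E: (merge_cascade _ _ _ _) => [s'' c'] /=.
    have := IH i.+1 (BWA (total s) (wseg s) (upd (bseg s) i.+1 (merge le (wseg s i) (bseg s i)))).
    rewrite E /= => H.
    rewrite (GE (total s %/ 2 ^ i.+1)) (negbFE ho) -divn2 -divnMA -expnSr.
    move: H; set g := G _; rewrite !expnS; nia.
Qed.

Lemma insert_total T (le : rel T) v s : total (bwa_insert le v s).1 = (total s).+1.
Proof.
rewrite /bwa_insert; case: ifP => // _.
case E: (merge_cascade _ _ _ _) => [s2 c] /=.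
by have := cascade_total le (total s).+1 0 (BWA (total s) (wseg s) (upd (bseg s) 0 [:: v])); rewrite E /= => ->.
Qed.

Lemma insert_cost T (le : rel T) v s : (bwa_insert le v s).2 <= G (total s).
Proof.
rewrite /bwa_insert /active /bit expn0 divn1 GE; case ho: (odd (total s)) => //.
case E: (merge_cascade _ _ _ _) => [s2 c] /=.
have := cascade_cost le (total s).+1 0 (BWA (total s) (wseg s) (upd (bseg s) 0 [:: v])).
rewrite E /= expn1 divn2. lia.
Qed.

Lemma insert_all_cost T (le : rel T) vs s :
  (insert_all le vs s).2 + S (total s) <= S (total s + size vs).
Proof.
elim: vs s => [|v vs IH] s /=; first by rewrite addn0.
case E1: (bwa_insert _ _ _) => [s1 c1].
case E2: (insert_all _ _ _) => [s2 c2] /=.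
have := IH s1; rewrite E2 /=.
have := insert_total le v s; rewrite E1 /= => ->.
have := insert_cost le v s; rewrite E1 /= => hc.
rewrite addnS /=. lia.
Qed.

Theorem mainTheorem7 :
  exists (C n0 : nat), forall (K : nat) (d : Order.disp_t) (T : orderType d)
    (vs : seq T),
    n0 <= size vs -> size vs <= 2 ^ K - 1 ->
    insertion_cost (<=%O : rel T) vs <= C * size vs * trunc_log 2 (size vs).
Proof.
exists 2, 2 => K d T vs h2 _.
have := insert_all_cost (<=%O : rel T) vs (empty_bwa T).
rewrite /insertion_cost /= add0n => H.
have hb := S_bound (size vs).
have : 0 < trunc_log 2 (size vs) by rewrite trunc_log_gt0.
move: H hb; set n := size vs; set L := trunc_log 2 n; set c := (_ _ _).2. nia.
Qed.
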